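(* Let $X$ be an $n\times n$ Boolean matrix with $X=X^*$, let $i\in\{1,\dots,n\}$, and let $\Delta X$ be an $n\times n$ Boolean matrix that is $i$-transitive and $i$-complete with respect to $X$. Then $$X+\Delta X=(X+I_{\Delta X,i}+J_{\Delta X,i})^2.$$
   Context: Boolean matrices have entries in $\{0,1\}$. $+$ is the entrywise OR and the product is the Boolean product. $X^*=\sum_{k\ge0}X^k$ with $X^0=I_n$ is the Kleene closure. For a Boolean matrix $M$, $I_{M,i}$ denotes the matrix equal to $M$ in row $i$ and zero elsewhere, and $J_{M,i}$ denotes the matrix equal to $M$ in column $i$ and zero elsewhere. $\Delta X$ is $i$-transitive with respect to $X$ if $I_{\Delta X,i}=I_{\Delta X,i}\cdot X$ and $J_{\Delta X,i}=X\cdot J_{\Delta X,i}$. $\Delta X$ is $i$-complete with respect to $X$ if $\Delta X=J_{\Delta X,i}\cdot I_{\Delta X,i}+X\cdot I_{\Delta X,i}+J_{\Delta X,i}\cdot X$. *)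

(* Defs.v *)
From mathcomp Require Import all_boot ssralg matrix.
Set Implicit Arguments. Unset Strict Implicit. Unset Printing Implicit Defensive.
Local Open Scope ring_scope.

Definition bmat (n : nat) := 'M[bool]_n.

Definition badd n (A B : bmat n) : bmat n := \matrix_(i, j) (A i j || B i j).
Definition bmul n (A B : bmat n) : bmat n :=
  \matrix_(i, j) [exists k, A i k && B k j].
Definition bid n : bmat n := \matrix_(i, j) (i == j).
Definition bzero n : bmat n := \matrix_(i, j) false.

Fixpoint bpow n (X : bmat n) (k : nat) : bmat n :=
  match k with 0 => bid n | k.+1 => bmul (bpow X k) X end.

(* Kleene closure X^* = sum_{k >= 0} X^k (infinite entrywise OR).
   (X^* ) i j holds iff some power X^k has a 1 at (i,j);
   X = X^* is stated entrywise. *)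
Definition kleene_entry n (X : bmat n) (i j : 'I_n) : Prop :=
  exists k, bpow X k i j.
Definition kleene_fixed n (X : bmat n) : Prop :=
  forall i j, X i j <-> kleene_entry X i j.

Definition Irow n (M : bmat n) (i : 'I_n) : bmat n :=
  \matrix_(r, c) ((r == i) && M r c).
Definition Jcol n (M : bmat n) (i : 'I_n) : bmat n :=
  \matrix_(r, c) ((c == i) && M r c).

Definition i_transitive n (D X : bmat n) (i : 'I_n) : Prop :=
  Irow D i = bmul (Irow D i) X /\ Jcol D i = bmul X (Jcol D i).

Definition i_complete n (D X : bmat n) (i : 'I_n) : Prop :=
  D = badd (badd (bmul (Jcol D i) (Irow D i)) (bmul X (Irow D i)))
           (bmul (Jcol D i) X).

(* Main.v *)
Require Import Defs.
From mathcomp Require Import all_boot ssralg matrix.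

Theorem mainTheorem12 (n : nat) (X D : bmat n) (i : 'I_n) :
  kleene_fixed X ->
  i_transitive D X i ->
  i_complete D X i ->
  badd X D = bmul (badd (badd X (Irow D i)) (Jcol D i))
                  (badd (badd X (Irow D i)) (Jcol D i)).
Proof.
move=> hK [hI hJ] hC.
have refl r : X r r.
  by apply/(hK r r); exists 0%N; rewrite /= /bid mxE eqxx.
have trans r k c : X r k -> X k c -> X r c.
  move=> h1 h2; apply/(hK r c); exists 2%N.
  rewrite /= /bmul mxE; apply/existsP; exists k; rewrite h2 andbT mxE.
  apply/existsP; exists r; by rewrite h1 andbT mxE eqxx.
have tI c k : D i k -> X k c -> D i c.
  move=> h1 h2; move/matrixP: hI => /(_ i c); rewrite !mxE eqxx /= => ->.
  by apply/existsP; exists k; rewrite mxE eqxx h1 h2.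
have tJ r k : X r k -> D k i -> D r i.
  move=> h1 h2; move/matrixP: hJ => /(_ r i); rewrite !mxE eqxx /= => ->.
  by apply/existsP; exists k; rewrite mxE eqxx h1 h2.
have cE r c : D r c = [|| [exists k, (k == i) && D r k && ((k == i) && D k c)],
                          [exists k, X r k && ((k == i) && D k c)] |
                          [exists k, (k == i) && D r k && X k c]].
  move/matrixP: hC => /(_ r c) {1}->.
  rewrite !mxE orbA; congr (_ || _ || _); apply: eq_existsb => k; by rewrite !mxE.
apply/matrixP => r c; rewrite !mxE; apply/idP/idP.
- case/orP => h.
    apply/existsP; exists c; by rewrite !mxE h refl.
  move: h; rewrite cE; case/or3P => /existsP [k].
  + case/andP => /andP [/eqP -> h1] /andP [_ h2]; apply/existsP; exists i.
    by rewrite !mxE eqxx h1 h2 !orbT.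
  + case/andP => h1 /andP [/eqP ke h2]; apply/existsP; exists k.
    by rewrite !mxE h1 ke eqxx -ke h2 !orbT.
  + case/andP => /andP [/eqP -> h1] h2; apply/existsP; exists i.
    by rewrite !mxE eqxx h1 h2 !orbT.
- case/existsP => k; rewrite !mxE => /andP [h1 h2].
  case/orP: h1 => [/orP [h1|/andP [/eqP er h1]]|/andP [/eqP ek h1]];
  case/orP: h2 => [/orP [h2|/andP [/eqP ek2 h2]]|/andP [/eqP ec h2]].
  + by rewrite (trans _ _ _ h1 h2).
  + apply/orP; right; rewrite cE; apply/or3P; apply: Or32; apply/existsP; exists k.
    by rewrite h1 ek2 eqxx -ek2 h2.
  + by subst c; rewrite (tJ _ _ h1 h2) orbT.
  + by subst r; rewrite (tI _ _ h1 h2) orbT.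
  + by subst r k; rewrite h2 orbT.
  + by subst r c; rewrite refl.
  + apply/orP; right; rewrite cE; apply/or3P; apply: Or33; apply/existsP; exists k.
    by rewrite h1 h2 ek eqxx.
  + apply/orP; right; rewrite cE; apply/or3P; apply: Or31; apply/existsP; exists k.
    by rewrite h1 ek eqxx -ek h2.
  + by subst k c; rewrite h1 orbT.
Qed.
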